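(* Let $R$ be an associative unital division ring over a field $F$ of characteristic $0$, $\lambda\in F$, and $v_{m,n}\in R$ invertible for all $(m,n)\in\mathbb{Z}^2$. Define $$\mathcal{L}_{m,n}=\begin{pmatrix}-v_{m,n}^{-1} & \lambda\\ 1 & -v_{m,n}\end{pmatrix},\qquad \mathcal{M}_{m,n}=\begin{pmatrix}v_{m+1,n}-v_{m,n}^{-1} & \lambda\\ 1 & 0\end{pmatrix}.$$ If the compatibility condition $\mathcal{L}_{m+1,n}\mathcal{M}_{m,n}=\mathcal{M}_{m,n+1}\mathcal{L}_{m,n}$ of the system $\Psi_{m,n+1}=\mathcal{L}_{m,n}\Psi_{m,n}$, $\Psi_{m+1,n}=\mathcal{M}_{m,n}\Psi_{m,n}$ holds for all $(m,n)$, then for all $(m,n)$ $$v_{m+1,n+1}-v_{m,n}=v_{m,n+1}^{-1}-v_{m+1,n}^{-1}.$$ *)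

(* Defs.v *)
From HB Require Import structures.
From mathcomp Require Import all_boot all_order all_algebra.
Set Implicit Arguments. Unset Strict Implicit. Unset Printing Implicit Defensive.
Import Order.TTheory GRing.Theory Num.Theory.
Local Open Scope ring_scope.

Definition mx2 (R : pzRingType) (a b c d : R) : 'M[R]_2 :=
  \matrix_(i < 2, j < 2)
    if (i : nat) == 0%N then (if (j : nat) == 0%N then a else b)
    else (if (j : nat) == 0%N then c else d).

Definition Lmat (F : fieldType) (R : unitAlgType F) (lam : F) (v : int -> int -> R)
  (m n : int) : 'M[R]_2 :=
  mx2 (- (v m n)^-1) (lam%:A) 1 (- v m n).

Definition Mmat (F : fieldType) (R : unitAlgType F) (lam : F) (v : int -> int -> R)
  (m n : int) : 'M[R]_2 :=
  mx2 (v (m + 1) n - (v m n)^-1) (lam%:A) 1 0.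

(* Main.v *)
Require Import Defs.
From HB Require Import structures.
From mathcomp Require Import all_boot all_order all_algebra.
Import Order.TTheory GRing.Theory Num.Theory.
Local Open Scope ring_scope.

Theorem proposition5p1 (F : fieldType) (R : unitAlgType F)
  (R_division : forall x : R, x != 0 -> x \is a GRing.unit)
  (F_char0 : [pchar F] =i pred0)
  (lam : F) (v : int -> int -> R)
  (v_unit : forall m n : int, v m n \is a GRing.unit)
  (compat : forall m n : int,
     Lmat lam v (m + 1) n *m Mmat lam v m n = Mmat lam v m (n + 1) *m Lmat lam v m n) :
  forall m n : int,
    v (m + 1) (n + 1) - v m n = (v m (n + 1))^-1 - (v (m + 1) n)^-1.
Proof.
move=> m n.
have uc := v_unit m n; have ua := v_unit (m + 1) n.
have := congr1 (fun A : 'M[R]_2 => A 0 0) (compat m n).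
rewrite /= !mxE !big_ord_recr !big_ord0 /Lmat /Mmat /mx2 !mxE /=.
set a := v (m + 1) n; set c := v m n; set d := v (m+1) (n+1); set e := v m (n+1).
move/addIr; rewrite !add0r mulrBr mulNr mulVr // mulrN -mulNr => H.
have := congr1 (fun x => x * c) H.
rewrite mulrDl divrK // mulN1r mulNr divrK // opprK => H2.
have Ha : a^-1 = c - (d - e^-1) by rewrite -H2 addNKr.
rewrite Ha opprB -[d - e^-1 - c]addrA addrCA addNKr.
by [].
Qed.
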